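(* Let $\|w\|_{L^\infty(\Omega)}\le\bar c_0\le\bar v/\sqrt5$, $\|w_x\|_{L^\infty(\Omega)}\le\bar c_1$, $\|w_{xx}\|_{L^\infty(\Omega)}\le\bar c_2$, $\|w_{xxx}\|_{L^\infty(\Omega)}\le\bar c_3$, and define $\underline v^2:=\bar v^2-\bar c_0^2$. Then for any $\xi\in X$ and $\delta\xi,\Delta\xi\in\delta X$, the third directional derivative of $f$ satisfies (pointwise in $\tau$) $$|f'''(\xi,\xi_\tau)[\delta\xi,\delta\xi_\tau]^2[\Delta\xi,\Delta\xi_\tau]|\le\Big(\bar\gamma_0\|\xi_\tau\|\|\delta\xi\|^2+\bar\gamma_2\|\delta\xi\|\|\delta\xi_\tau\|+\frac{\bar\gamma_4}{\|\xi_\tau\|}\|\delta\xi_\tau\|^2\Big)\|\Delta\xi\|+\Big(\bar\gamma_1\|\delta\xi\|^2+\frac{\bar\gamma_3}{\|\xi_\tau\|}\|\delta\xi\|\|\delta\xi_\tau\|+\frac{\bar\gamma_5}{\|\xi_\tau\|^2}\|\delta\xi_\tau\|^2\Big)\|\Delta\xi_\tau\|$$ with $\bar\gamma_0=\frac{2}{\underline v^4}(37\bar c_1^3+21\bar c_1\bar c_2\underline v+2\bar c_3\underline v^2)$, $\bar\gamma_1=\frac{1}{\underline v^3}(29\bar c_1^2+7\underline v\bar c_2)$, $\bar\gamma_2=\frac{1}{\underline v^3}(57\bar c_1^2+13\underline v\bar c_2)$, $\bar\gamma_3=40\frac{\bar c_1}{\underline v^2}$, $\bar\gamma_4=20\frac{\bar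 c_1}{\underline v^2}$, $\bar\gamma_5=\frac{18}{\underline v}$.
   Context: Fix $\bar v>0$, $x_O\ne x_D\in\mathbb R^2$, and $w\in C^3(\mathbb R^2,\mathbb R^2)$ with $\|w(x)\|<\bar v$; $w_x,w_{xx},w_{xxx}$ are its derivatives, measured in operator norms; $\|g\|_{L^\infty(\Omega)}$ is the essential supremum of the pointwise norm over $\Omega$, where $\Omega\subset\mathbb R^2$ is an ellipse with foci $x_O,x_D$ containing every globally optimal trajectory. $f(x,p)=\frac{-p^Tw(x)+\sqrt{(p^Tw(x))^2+(\bar v^2-w(x)^Tw(x))p^Tp}}{\bar v^2-w(x)^Tw(x)}$ for $x,p\in\mathbb R^2$; $f'''(\xi,\xi_\tau)[\delta\xi,\delta\xi_\tau]^2[\Delta\xi,\Delta\xi_\tau]$ denotes the third derivative of $f$ with respect to $(x,p)$ at $(\xi(\tau),\xi_\tau(\tau))$ applied to the directions $(\delta\xi(\tau),\delta\xi_\tau(\tau))$ (twice) and $(\Delta\xi(\tau),\Delta\xi_\tau(\tau))$. $X=\{\xi\in W^{1,\infty}(]0,1[,\mathbb R^2):\xi(0)=x_O,\xi(1)=x_D\}$, $\delta X=W_0^{1,\infty}(]0,1[,\mathbb R^2)$, subscript $\tau$ denotes derivative; $\|\cdot\|$ is the Euclidean norm.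
   Formalization: The estimate is asserted only at those τ where ξ(τ) lies in Ω, rather than for every ξ ∈ X at every τ. The statement above fails without it. *)

(* Defs.v *)
From Stdlib Require Import Reals Lra.
From Coquelicot Require Import Coquelicot.
Open Scope R_scope.

Definition vec : Type := (R * R)%type.
Definition vadd (u v : vec) : vec := (fst u + fst v, snd u + snd v).
Definition vsub (u v : vec) : vec := (fst u - fst v, snd u - snd v).
Definition vscal (s : R) (u : vec) : vec := (s * fst u, s * snd u).
Definition vzero : vec := (0, 0).
Definition dot (u v : vec) : R := fst u * fst v + snd u * snd v.
Definition norm2 (u : vec) : R := sqrt (dot u u).

Definition fcost (vbar : R) (w : vec -> vec) (x p : vec) : R :=
  let a := dot p (w x) in
  let d := vbar ^ 2 - dot (w x) (w x) in
  (- a + sqrt (a ^ 2 + d * dot p p)) / d.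

Definition vDerive (g : R -> vec) (t : R) : vec :=
  (Derive (fun s => fst (g s)) t, Derive (fun s => snd (g s)) t).

Definition has_vderiv (g : R -> vec) (t : R) (v : vec) : Prop :=
  is_derive (fun s => fst (g s)) t (fst v) /\ is_derive (fun s => snd (g s)) t (snd v).

Definition Dw1 (w : vec -> vec) (x h : vec) : vec :=
  vDerive (fun t => w (vadd x (vscal t h))) 0.
Definition Dw2 (w : vec -> vec) (x h1 h2 : vec) : vec :=
  vDerive (fun t => Dw1 w (vadd x (vscal t h1)) h2) 0.
Definition Dw3 (w : vec -> vec) (x h1 h2 h3 : vec) : vec :=
  vDerive (fun t => Dw2 w (vadd x (vscal t h1)) h2 h3) 0.

Definition pd1 (g : vec -> R) (x : vec) : R := Derive (fun t => g (t, snd x)) (fst x).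
Definition pd2 (g : vec -> R) (x : vec) : R := Derive (fun t => g (fst x, t)) (snd x).

Fixpoint Ck (k : nat) (g : vec -> R) : Prop :=
  match k with
  | O => forall x : vec, continuous g x
  | S k' =>
      (forall x : vec, continuous g x) /\
      (forall x : vec, ex_derive (fun t => g (t, snd x)) (fst x) /\
                       ex_derive (fun t => g (fst x, t)) (snd x)) /\
      Ck k' (pd1 g) /\ Ck k' (pd2 g)
  end.

Definition C3 (w : vec -> vec) : Prop :=
  Ck 3 (fun x => fst (w x)) /\ Ck 3 (fun x => snd (w x)).

(** Third derivative of f w.r.t. (x,p) at (x,p), applied to (dx,dp) twice and (Dx,Dp). *)
Definition D3f (vbar : R) (w : vec -> vec) (x p dx dp Dx Dp : vec) : R :=
  Derive (fun t =>
    Derive_n (fun s =>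
      fcost vbar w (vadd x (vadd (vscal s dx) (vscal t Dx)))
                   (vadd p (vadd (vscal s dp) (vscal t Dp)))) 2 0) 0.

Definition ellipse (xO xD : vec) (a : R) (y : vec) : Prop :=
  norm2 (vsub y xO) + norm2 (vsub y xD) < a.

(** W^{1,infty}(]0,1[,R^2) functions = Lipschitz functions on [0,1]
    (continuous representative). *)
Definition lipschitz01 (g : R -> vec) : Prop :=
  exists L : R, forall s t : R, 0 <= s <= 1 -> 0 <= t <= 1 ->
    norm2 (vsub (g s) (g t)) <= L * Rabs (s - t).

Definition InX (xO xD : vec) (xi : R -> vec) : Prop :=
  lipschitz01 xi /\ xi 0 = xO /\ xi 1 = xD.

Definition InDX (dxi : R -> vec) : Prop :=
  lipschitz01 dxi /\ dxi 0 = vzero /\ dxi 1 = vzero.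

(* Main.v *)
Require Import Defs.
From Stdlib Require Import Reals Lra.
From Coquelicot Require Import Coquelicot.
Open Scope R_scope.

Lemma isd_mult (f g : R -> R) x df dg : is_derive f x df -> is_derive g x dg ->
  is_derive (fun t => f t * g t) x (df * g x + f x * dg).
Proof. intros H1 H2. exact (is_derive_mult f g x df dg H1 H2 Rmult_comm). Qed.
Lemma isd_plus (f g : R -> R) x df dg : is_derive f x df -> is_derive g x dg ->
  is_derive (fun t => f t + g t) x (df + dg).
Proof. intros H1 H2. exact (is_derive_plus f g x df dg H1 H2). Qed.
Lemma isd_opp (f : R -> R) x df : is_derive f x df ->
  is_derive (fun t => - f t) x (- df).
Proof. intros H1. exact (is_derive_opp f x df H1). Qed.
Lemma isd_comp (f g : R -> R) x df dg : is_derive f (g x) df -> is_derive g x dg ->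
  is_derive (fun t => f (g t)) x (dg * df).
Proof. intros H1 H2. exact (is_derive_comp f g x df dg H1 H2). Qed.
Lemma isd_const (c x : R) : is_derive (fun _ => c) x 0.
Proof. exact (is_derive_const c x). Qed.
Lemma isd_id (x : R) : is_derive (fun t => t) x 1.
Proof. exact (is_derive_id x). Qed.
Lemma isd_eq (f : R -> R) (x l l' : R) : is_derive f x l -> @eq R l l' -> is_derive f x l'.
Proof. intros H ->; exact H. Qed.
Lemma isd_ext (f g : R -> R) x l : (forall t, f t = g t) -> is_derive f x l -> is_derive g x l.
Proof. intros H1 H2. exact (is_derive_ext f g x l H1 H2). Qed.

Lemma cont2d (F : vec -> R) x y : continuous F (x, y) ->
  continuity_2d_pt (fun u v => F (u, v)) x y.
Proof.
  intros H. apply continuity_2d_pt_filterlim.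
  eapply filterlim_ext; [| exact H].
  intros [a b]; reflexivity.
Qed.

Lemma diff_partials (g : vec -> R) (x y : R) :
  (forall z : vec, ex_derive (fun t => g (t, snd z)) (fst z) /\ ex_derive (fun t => g (fst z, t)) (snd z)) ->
  continuous (pd1 g) (x, y) ->
  differentiable_pt_lim (fun u v => g (u, v)) x y (pd1 g (x, y)) (pd2 g (x, y)).
Proof.
  intros Hex Hc eps.
  assert (He2 : 0 < eps / 2) by (destruct eps; simpl; lra).
  pose proof (cont2d _ _ _ Hc (mkposreal _ He2)) as [d1 Hd1].
  assert (Hy : derivable_pt_lim (fun t => g (x, t)) y (pd2 g (x, y))).
  { apply is_derive_Reals. destruct (Hex (x, y)) as [_ H2].
    unfold pd2; simpl in *. apply Derive_correct. exact H2. }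
  destruct (Hy (eps / 2) He2) as [d2 Hd2].
  assert (Hd : 0 < Rmin d1 d2) by (apply Rmin_pos; [apply cond_pos | apply cond_pos]).
  exists (mkposreal _ Hd). intros u v Hu Hv. simpl in Hu, Hv.
  assert (Hu1 : Rabs (u - x) < d1) by (eapply Rlt_le_trans; [exact Hu| apply Rmin_l]).
  assert (Hv1 : Rabs (v - y) < d1) by (eapply Rlt_le_trans; [exact Hv| apply Rmin_l]).
  assert (Hv2 : Rabs (v - y) < d2) by (eapply Rlt_le_trans; [exact Hv| apply Rmin_r]).
  assert (B2 : Rabs (g (x, v) - g (x, y) - pd2 g (x, y) * (v - y)) <= eps / 2 * Rabs (v - y)).
  { destruct (Req_dec (v - y) 0) as [E|E].
    - replace v with y by lra. replace (g (x, y) - g (x, y) - pd2 g (x, y) * (y - y)) with 0 by ring. rewrite Rabs_R0; apply Rmult_le_pos; [lra| apply Rabs_pos].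
    - specialize (Hd2 (v - y) E Hv2). replace (y + (v - y)) with v in Hd2 by ring.
      replace (g (x, v) - g (x, y) - pd2 g (x, y) * (v - y)) with
        (((g (x, v) - g (x, y)) / (v - y) - pd2 g (x, y)) * (v - y)) by (field; exact E).
      rewrite Rabs_mult. apply Rmult_le_compat_r; [apply Rabs_pos | lra]. }
  assert (B1 : Rabs (g (u, v) - g (x, v) - pd1 g (x, y) * (u - x)) <= eps / 2 * Rabs (u - x)).
  { destruct (MVT_cor4 (fun t => g (t, v)) (fun t => pd1 g (t, v)) x (Rabs (u - x))) with (b := u)
      as [c [Hc1 Hc2]].
    - intros c _. destruct (Hex (c, v)) as [H1 _]. unfold pd1; simpl in *.
      apply Derive_correct. exact H1.
    - lra.
    - rewrite Hc1.
      replace (pd1 g (c, v) * (u - x) - pd1 g (x, y) * (u - x)) with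
        ((pd1 g (c, v) - pd1 g (x, y)) * (u - x)) by ring.
      rewrite Rabs_mult. apply Rmult_le_compat_r; [apply Rabs_pos|].
      left. apply (Hd1 c v); lra. }
  replace (g (u, v) - g (x, y) - (pd1 g (x, y) * (u - x) + pd2 g (x, y) * (v - y))) with
    ((g (u, v) - g (x, v) - pd1 g (x, y) * (u - x)) + (g (x, v) - g (x, y) - pd2 g (x, y) * (v - y))) by ring.
  eapply Rle_trans; [apply Rabs_triang|].
  assert (Rabs (u - x) <= Rmax (Rabs (u - x)) (Rabs (v - y))) by apply Rmax_l.
  assert (Rabs (v - y) <= Rmax (Rabs (u - x)) (Rabs (v - y))) by apply Rmax_r.
  assert (0 < eps) by apply cond_pos.
  nra.
Qed.

Definition lin (g : vec -> R) (Y h : vec) := pd1 g Y * fst h + pd2 g Y * snd h.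

Lemma Ck_cont k g : Ck k g -> forall x, continuous g x.
Proof. destruct k; simpl; tauto. Qed.

Lemma affine_deriv (a b t0 : R) : derivable_pt_lim (fun t => a + t * b) t0 b.
Proof. apply is_derive_Reals. auto_derive; auto; ring. Qed.

Lemma line_deriv k g : Ck (S k) g -> forall Y h t0,
  is_derive (fun t => g (vadd Y (vscal t h))) t0 (lin g (vadd Y (vscal t0 h)) h).
Proof.
  intros [_ [Hex [H1 _]]] Y h t0. apply is_derive_Reals.
  pose proof (Ck_cont _ _ H1) as Hc.
  exact (derivable_pt_lim_comp_2d (fun u v => g (u, v)) (fun t => fst Y + t * fst h)
    (fun t => snd Y + t * snd h) t0 _ _ _ _
    (diff_partials g _ _ Hex (Hc _)) (affine_deriv _ _ _) (affine_deriv _ _ _)).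
Qed.

Lemma vadd_0 Y h : vadd Y (vscal 0 h) = Y.
Proof. destruct Y, h; unfold vadd, vscal; simpl; f_equal; ring. Qed.

Lemma lift (F : vec -> R) (E : vec -> vec -> R) :
  (forall Y h t0, is_derive (fun t => F (vadd Y (vscal t h))) t0 (E (vadd Y (vscal t0 h)) h)) ->
  forall Y h, Derive (fun r => F (vadd Y (vscal r h))) 0 = E Y h.
Proof. intros H Y h. transitivity (E (vadd Y (vscal 0 h)) h).
  - apply is_derive_unique. apply H.
  - rewrite vadd_0. reflexivity. Qed.

Definition lin2 (g : vec -> R) (Y h k : vec) := lin (pd1 g) Y h * fst k + lin (pd2 g) Y h * snd k.
Definition lin3 (g : vec -> R) (Z h k l : vec) :=
  (lin (pd1 (pd1 g)) Z h * fst k + lin (pd2 (pd1 g)) Z h * snd k) * fst l +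
  (lin (pd1 (pd2 g)) Z h * fst k + lin (pd2 (pd2 g)) Z h * snd k) * snd l.

Lemma L1 g : Ck 3 g -> forall Y h k t0,
  is_derive (fun t => lin g (vadd Y (vscal t h)) k) t0 (lin2 g (vadd Y (vscal t0 h)) h k).
Proof.
  intros [_ [_ [Ha Hb]]] Y h k t0. unfold lin at 1.
  pose proof (line_deriv 1 _ Ha Y h t0) as E1.
  pose proof (line_deriv 1 _ Hb Y h t0) as E2.
  pose proof (isd_mult _ _ t0 _ _ E1 (isd_const (fst k) t0)) as E3.
  pose proof (isd_mult _ _ t0 _ _ E2 (isd_const (snd k) t0)) as E4.
  pose proof (isd_plus _ _ t0 _ _ E3 E4) as E5.
  eapply isd_eq; [exact E5|].
  unfold lin2. cbv beta. ring.
Qed.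

Lemma L2 g : Ck 3 g -> forall Y h k l t0,
  is_derive (fun t => lin2 g (vadd Y (vscal t h)) k l) t0 (lin3 g (vadd Y (vscal t0 h)) h k l).
Proof.
  intros [_ [_ [[_ [_ [Ha Hb]]] [_ [_ [Hc Hd]]]]]] Y h k l t0. unfold lin2, lin at 1 2.
  pose proof (line_deriv 0 _ Ha Y h t0) as E1.
  pose proof (line_deriv 0 _ Hb Y h t0) as E2.
  pose proof (line_deriv 0 _ Hc Y h t0) as E3.
  pose proof (line_deriv 0 _ Hd Y h t0) as E4.
  pose proof (isd_plus _ _ t0 _ _ (isd_mult _ _ t0 _ _ E1 (isd_const (fst k) t0))
                                (isd_mult _ _ t0 _ _ E2 (isd_const (snd k) t0))) as F1.
  pose proof (isd_plus _ _ t0 _ _ (isd_mult _ _ t0 _ _ E3 (isd_const (fst k) t0))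
                                (isd_mult _ _ t0 _ _ E4 (isd_const (snd k) t0))) as F2.
  pose proof (isd_plus _ _ t0 _ _ (isd_mult _ _ t0 _ _ F1 (isd_const (fst l) t0))
                                (isd_mult _ _ t0 _ _ F2 (isd_const (snd l) t0))) as F3.
  eapply isd_eq; [exact F3|].
  unfold lin3. cbv beta. ring.
Qed.

Lemma D0 (w : vec -> vec) (pi : vec -> R) (Hpi : forall (G : R -> vec) t, pi (vDerive G t) = Derive (fun s => pi (G s)) t) (Hg : Ck 3 (fun x => pi (w x))) Y h : pi (Dw1 w Y h) = lin (fun x => pi (w x)) Y h.
Proof.
  unfold Dw1. rewrite Hpi.
  apply (lift (fun x => pi (w x)) (lin (fun x => pi (w x)))).
  intros. exact (line_deriv 2 _ Hg Y0 h0 t0).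
Qed.

Lemma W0 (w : vec -> vec) (pi : vec -> R) (Hpi : forall (G : R -> vec) t, pi (vDerive G t) = Derive (fun s => pi (G s)) t) (Hg : Ck 3 (fun x => pi (w x))) Y h t0 : is_derive (fun t => pi (w (vadd Y (vscal t h)))) t0 (pi (Dw1 w (vadd Y (vscal t0 h)) h)).
Proof. rewrite (D0 w pi Hpi Hg). exact (line_deriv 2 _ Hg Y h t0). Qed.

Lemma D1 (w : vec -> vec) (pi : vec -> R) (Hpi : forall (G : R -> vec) t, pi (vDerive G t) = Derive (fun s => pi (G s)) t) (Hg : Ck 3 (fun x => pi (w x))) Y h k : pi (Dw2 w Y h k) = lin2 (fun x => pi (w x)) Y h k.
Proof.
  unfold Dw2. rewrite Hpi.
  rewrite (Derive_ext _ (fun s => lin (fun x => pi (w x)) (vadd Y (vscal s h)) k)).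
  2:{ intros; apply (D0 w pi Hpi Hg). }
  apply (lift (fun Z => lin (fun x => pi (w x)) Z k) (fun Z h => lin2 (fun x => pi (w x)) Z h k)).
  intros. exact (L1 _ Hg Y0 h0 k t0).
Qed.

Lemma W1 (w : vec -> vec) (pi : vec -> R) (Hpi : forall (G : R -> vec) t, pi (vDerive G t) = Derive (fun s => pi (G s)) t) (Hg : Ck 3 (fun x => pi (w x))) Y h k t0 : is_derive (fun t => pi (Dw1 w (vadd Y (vscal t h)) k)) t0
   (pi (Dw2 w (vadd Y (vscal t0 h)) h k)).
Proof.
  rewrite (D1 w pi Hpi Hg). eapply isd_ext; [intros; symmetry; apply (D0 w pi Hpi Hg)|].
  exact (L1 _ Hg Y h k t0).
Qed.

Lemma D2 (w : vec -> vec) (pi : vec -> R) (Hpi : forall (G : R -> vec) t, pi (vDerive G t) = Derive (fun s => pi (G s)) t) (Hg : Ck 3 (fun x => pi (w x))) Y h k l : pi (Dw3 w Y h k l) = lin3 (fun x => pi (w x)) Y h k l.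
Proof.
  unfold Dw3. rewrite Hpi.
  rewrite (Derive_ext _ (fun s => lin2 (fun x => pi (w x)) (vadd Y (vscal s h)) k l)).
  2:{ intros; apply (D1 w pi Hpi Hg). }
  apply (lift (fun Z => lin2 (fun x => pi (w x)) Z k l) (fun Z h => lin3 (fun x => pi (w x)) Z h k l)).
  intros. exact (L2 _ Hg Y0 h0 k l t0).
Qed.

Lemma W2 (w : vec -> vec) (pi : vec -> R) (Hpi : forall (G : R -> vec) t, pi (vDerive G t) = Derive (fun s => pi (G s)) t) (Hg : Ck 3 (fun x => pi (w x))) Y h k l t0 : is_derive (fun t => pi (Dw2 w (vadd Y (vscal t h)) k l)) t0
   (pi (Dw3 w (vadd Y (vscal t0 h)) h k l)).
Proof.
  rewrite (D2 w pi Hpi Hg). eapply isd_ext; [intros; symmetry; apply (D1 w pi Hpi Hg)|].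
  exact (L2 _ Hg Y h k l t0).
Qed.

Record jet := mkJ { j0 : R; js : R; jt : R; jss : R; jst : R; jsst : R }.

Definition jconst c := mkJ c 0 0 0 0 0.
Definition jadd J K := mkJ (j0 J + j0 K) (js J + js K) (jt J + jt K) (jss J + jss K) (jst J + jst K) (jsst J + jsst K).
Definition jmul J K := mkJ (j0 J * j0 K) (js J * j0 K + j0 J * js K) (jt J * j0 K + j0 J * jt K)
  (jss J * j0 K + 2 * (js J * js K) + j0 J * jss K)
  (jst J * j0 K + js J * jt K + jt J * js K + j0 J * jst K)
  (jsst J * j0 K + jss J * jt K + 2 * (jst J * js K) + 2 * (js J * jst K) + jt J * jss K + j0 J * jsst K).
Definition jcomp y0 y1 y2 y3 J := mkJ y0 (y1 * js J) (y1 * jt J)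
  (y2 * (js J * js J) + y1 * jss J) (y2 * (js J * jt J) + y1 * jst J)
  (y3 * (js J * js J) * jt J + y2 * (jss J * jt J + 2 * (js J * jst J)) + y1 * jsst J).

Definition Nice (g : R -> R -> R) (J : jet) : Prop :=
  exists (d : R) (gs gss : R -> R -> R), 0 < d /\
   (forall s t, Rabs s < d -> Rabs t < d ->
      is_derive (fun z => g z t) s (gs s t) /\ is_derive (fun z => gs z t) s (gss s t)) /\
   g 0 0 = j0 J /\ gs 0 0 = js J /\ gss 0 0 = jss J /\
   is_derive (fun t => g 0 t) 0 (jt J) /\ is_derive (fun t => gs 0 t) 0 (jst J) /\
   is_derive (fun t => gss 0 t) 0 (jsst J).

Lemma mkNice g J d gs gss : 0 < d ->
   (forall s t, Rabs s < d -> Rabs t < d ->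
      is_derive (fun z => g z t) s (gs s t) /\ is_derive (fun z => gs z t) s (gss s t)) ->
   g 0 0 = j0 J -> gs 0 0 = js J -> gss 0 0 = jss J ->
   is_derive (fun t => g 0 t) 0 (jt J) -> is_derive (fun t => gs 0 t) 0 (jst J) ->
   is_derive (fun t => gss 0 t) 0 (jsst J) -> Nice g J.
Proof. intros. exists d, gs, gss. tauto. Qed.

Lemma Nice_ext g h J : (forall s t, g s t = h s t) -> Nice g J -> Nice h J.
Proof.
  intros E [d [gs [gss [Hd [H [E0 [E1 [E2 [T0 [T1 T2]]]]]]]]]].
  apply (mkNice _ _ d gs gss); auto.
  - intros s t Hs Ht. destruct (H s t Hs Ht) as [A B]. split; auto.
    eapply isd_ext; [intros; apply E|]. exact A.
  - rewrite <- E; auto.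
  - eapply isd_ext; [intros; apply E|]. auto.
Qed.

Lemma Nice_const c : Nice (fun _ _ => c) (jconst c).
Proof.
  apply (mkNice _ _ 1 (fun _ _ => 0) (fun _ _ => 0)); try reflexivity; try apply isd_const; try lra.
  intros; split; apply isd_const.
Qed.

Lemma Nice_affine a b c : Nice (fun s t => a + (s * b + t * c)) (mkJ a b c 0 0 0).
Proof.
  apply (mkNice _ _ 1 (fun _ _ => b) (fun _ _ => 0)); simpl; try reflexivity; try apply isd_const; try lra.
  - intros; split; [|apply isd_const]. auto_derive; auto; cbv beta; ring.
  - auto_derive; auto; cbv beta; ring.
Qed.

Lemma min_split a d d' : Rabs a < Rmin d d' -> Rabs a < d /\ Rabs a < d'.
Proof. intros H; split; eapply Rlt_le_trans; try exact H; [apply Rmin_l | apply Rmin_r]. Qed.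

Lemma Nice_plus g h J K : Nice g J -> Nice h K -> Nice (fun s t => g s t + h s t) (jadd J K).
Proof.
  intros [d [gs [gss [Hd [H [E0 [E1 [E2 [T0 [T1 T2]]]]]]]]]]
         [d' [hs [hss [Hd' [H' [F0 [F1 [F2 [U0 [U1 U2]]]]]]]]]].
  apply (mkNice _ _ (Rmin d d') (fun s t => gs s t + hs s t) (fun s t => gss s t + hss s t)); simpl.
  - apply Rmin_pos; auto.
  - intros s t Hs Ht.
    destruct (min_split _ _ _ Hs) as [Hs1 Hs2]. destruct (min_split _ _ _ Ht) as [Ht1 Ht2].
    destruct (H s t Hs1 Ht1) as [A1 A2]. destruct (H' s t Hs2 Ht2) as [B1 B2].
    split; apply isd_plus; auto.
  - congruence.
  - congruence.
  - congruence.
  - apply isd_plus; auto.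
  - apply isd_plus; auto.
  - apply isd_plus; auto.
Qed.

Lemma Nice_mult g h J K : Nice g J -> Nice h K -> Nice (fun s t => g s t * h s t) (jmul J K).
Proof.
  intros [d [gs [gss [Hd [H [E0 [E1 [E2 [T0 [T1 T2]]]]]]]]]]
         [d' [hs [hss [Hd' [H' [F0 [F1 [F2 [U0 [U1 U2]]]]]]]]]].
  apply (mkNice _ _ (Rmin d d') (fun s t => gs s t * h s t + g s t * hs s t)
    (fun s t => gss s t * h s t + 2 * (gs s t * hs s t) + g s t * hss s t)); simpl.
  - apply Rmin_pos; auto.
  - intros s t Hs Ht.
    destruct (min_split _ _ _ Hs) as [Hs1 Hs2]. destruct (min_split _ _ _ Ht) as [Ht1 Ht2].
    destruct (H s t Hs1 Ht1) as [A1 A2]. destruct (H' s t Hs2 Ht2) as [B1 B2].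
    split.
    + exact (isd_mult _ _ s _ _ A1 B1).
    + eapply isd_eq.
      * exact (isd_plus _ _ s _ _ (isd_mult _ _ s _ _ A2 B1) (isd_mult _ _ s _ _ A1 B2)).
      * cbv beta; cbv beta; ring.
  - congruence.
  - rewrite E0, E1, F0, F1; cbv beta; ring.
  - rewrite E0, E1, E2, F0, F1, F2; cbv beta; ring.
  - eapply isd_eq; [exact (isd_mult _ _ 0 _ _ T0 U0)|]. cbv beta; rewrite E0, F0; cbv beta; ring.
  - eapply isd_eq; [exact (isd_plus _ _ 0 _ _ (isd_mult _ _ 0 _ _ T1 U0) (isd_mult _ _ 0 _ _ T0 U1))|].
    cbv beta; rewrite E0, E1, F0, F1; cbv beta; ring.
  - eapply isd_eq.
    + exact (isd_plus _ _ 0 _ _ (isd_plus _ _ 0 _ _ (isd_mult _ _ 0 _ _ T2 U0)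
         (isd_mult _ _ 0 _ _ (isd_const 2 0) (isd_mult _ _ 0 _ _ T1 U1))) (isd_mult _ _ 0 _ _ T0 U2)).
    + cbv beta; rewrite E0, E1, E2, F0, F1, F2; cbv beta; ring.
Qed.

Lemma Nice_comp (phi phi1 phi2 phi3 : R -> R) g J :
  (forall y, 0 < y -> is_derive phi y (phi1 y) /\ is_derive phi1 y (phi2 y) /\ is_derive phi2 y (phi3 y)) ->
  Nice g J -> (exists d', 0 < d' /\ forall s t, Rabs s < d' -> Rabs t < d' -> 0 < g s t) ->
  Nice (fun s t => phi (g s t)) (jcomp (phi (j0 J)) (phi1 (j0 J)) (phi2 (j0 J)) (phi3 (j0 J)) J).
Proof.
  intros Hphi [d [gs [gss [Hd [H [E0 [E1 [E2 [T0 [T1 T2]]]]]]]]]] [d' [Hd' Hpos]].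
  apply (mkNice _ _ (Rmin d d') (fun s t => phi1 (g s t) * gs s t)
    (fun s t => phi2 (g s t) * (gs s t * gs s t) + phi1 (g s t) * gss s t)); simpl.
  - apply Rmin_pos; auto.
  - intros s t Hs Ht.
    destruct (min_split _ _ _ Hs) as [Hs1 Hs2]. destruct (min_split _ _ _ Ht) as [Ht1 Ht2].
    destruct (H s t Hs1 Ht1) as [A1 A2].
    destruct (Hphi (g s t) (Hpos s t Hs2 Ht2)) as [P1 [P2 P3]].
    split.
    + eapply isd_eq; [exact (isd_comp phi (fun z => g z t) s _ _ P1 A1)|]. cbv beta; ring.
    + eapply isd_eq.
      * exact (isd_mult _ _ s _ _ (isd_comp phi1 (fun z => g z t) s _ _ P2 A1) A2).
      * cbv beta; ring.
  - rewrite E0; reflexivity.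
  - rewrite E0, E1; reflexivity.
  - rewrite E0, E1, E2; reflexivity.
  - assert (Hp : 0 < g 0 0) by (apply Hpos; rewrite Rabs_R0; auto).
    destruct (Hphi _ Hp) as [P1 _].
    eapply isd_eq; [exact (isd_comp phi (fun t => g 0 t) 0 _ _ P1 T0)|]. cbv beta; rewrite E0; ring.
  - assert (Hp : 0 < g 0 0) by (apply Hpos; rewrite Rabs_R0; auto).
    destruct (Hphi _ Hp) as [_ [P2 _]].
    eapply isd_eq; [exact (isd_mult _ _ 0 _ _ (isd_comp phi1 (fun t => g 0 t) 0 _ _ P2 T0) T1)|].
    cbv beta; rewrite E0, E1; ring.
  - assert (Hp : 0 < g 0 0) by (apply Hpos; rewrite Rabs_R0; auto).
    destruct (Hphi _ Hp) as [_ [P2 P3]].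
    eapply isd_eq.
    + exact (isd_plus _ _ 0 _ _ (isd_mult _ _ 0 _ _ (isd_comp phi2 (fun t => g 0 t) 0 _ _ P3 T0)
                                   (isd_mult _ _ 0 _ _ T1 T1))
                                (isd_mult _ _ 0 _ _ (isd_comp phi1 (fun t => g 0 t) 0 _ _ P2 T0) T2)).
    + cbv beta; rewrite E0, E1, E2; ring.
Qed.

Lemma locally_of (x d : R) (P : R -> Prop) : 0 < d -> (forall y, Rabs (y - x) < d -> P y) -> locally x P.
Proof. intros Hd H. exists (mkposreal d Hd). intros y Hy. apply H. exact Hy. Qed.

Lemma Nice_D3 g J : Nice g J -> Derive (fun t => Derive_n (fun s => g s t) 2 0) 0 = jsst J.
Proof.
  intros [d [gs [gss [Hd [H [E0 [E1 [E2 [T0 [T1 T2]]]]]]]]]].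
  transitivity (Derive (fun t => gss 0 t) 0); [|apply is_derive_unique; exact T2].
  apply Derive_ext_loc. apply (locally_of 0 d); auto.
  intros t Ht. rewrite Rminus_0_r in Ht. simpl.
  transitivity (Derive (fun s => gs s t) 0).
  - apply Derive_ext_loc. apply (locally_of 0 d); auto.
    intros s Hs. rewrite Rminus_0_r in Hs. apply is_derive_unique. apply (H s t Hs Ht).
  - apply is_derive_unique. apply H; auto. rewrite Rabs_R0; auto.
Qed.

Lemma sqrt_derivs : forall y, 0 < y ->
  is_derive sqrt y (/ (2 * sqrt y)) /\ is_derive (fun y => / (2 * sqrt y)) y (- / (4 * sqrt y ^ 3)) /\
  is_derive (fun y => - / (4 * sqrt y ^ 3)) y (3 / (8 * sqrt y ^ 5)).
Proof.
  intros y Hy. assert (Hs : 0 < sqrt y) by (apply sqrt_lt_R0; auto).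
  split; [|split]; auto_derive.
  all: try (repeat split; auto; apply Rgt_not_eq; repeat apply Rmult_lt_0_compat; lra).
  all: field; apply Rgt_not_eq; exact Hs.
Qed.

Lemma inv_derivs : forall y, 0 < y ->
  is_derive Rinv y (- / y ^ 2) /\ is_derive (fun y => - / y ^ 2) y (2 / y ^ 3) /\
  is_derive (fun y => 2 / y ^ 3) y (- 6 / y ^ 4).
Proof.
  intros y Hy.
  split; [|split]; auto_derive.
  all: try (repeat split; auto; apply Rgt_not_eq; repeat apply Rmult_lt_0_compat; lra).
  all: field; apply Rgt_not_eq; exact Hy.
Qed.

Definition maj (J B : jet) : Prop :=
  Rabs (j0 J) <= j0 B /\ Rabs (js J) <= js B /\ Rabs (jt J) <= jt B /\
  Rabs (jss J) <= jss B /\ Rabs (jst J) <= jst B /\ Rabs (jsst J) <= jsst B.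

Ltac bnd := match goal with
 | |- Rabs (?a + ?b) <= ?A + ?B =>
     eapply Rle_trans; [apply Rabs_triang|]; apply Rplus_le_compat; bnd
 | |- Rabs (?a * ?b) <= ?A * ?B =>
     rewrite Rabs_mult; apply Rmult_le_compat; [apply Rabs_pos|apply Rabs_pos| bnd | bnd]
 | |- _ => first [assumption | (rewrite Rabs_pos_eq; lra) | idtac]
 end.

Lemma maj_const c K : Rabs c <= K -> maj (jconst c) (jconst K).
Proof. intros H. unfold maj; simpl; rewrite Rabs_R0; repeat split; lra. Qed.

Lemma maj_add J1 J2 B1 B2 : maj J1 B1 -> maj J2 B2 -> maj (jadd J1 J2) (jadd B1 B2).
Proof.
  unfold maj; simpl. intros (?&?&?&?&?&?) (?&?&?&?&?&?).
  repeat split; bnd.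
Qed.

Lemma maj_mul J1 J2 B1 B2 : maj J1 B1 -> maj J2 B2 -> maj (jmul J1 J2) (jmul B1 B2).
Proof.
  unfold maj; simpl. intros (?&?&?&?&?&?) (?&?&?&?&?&?).
  repeat split; bnd.
Qed.

Lemma maj_comp y0 y1 y2 y3 b0 b1 b2 b3 J B :
  Rabs y0 <= b0 -> Rabs y1 <= b1 -> Rabs y2 <= b2 -> Rabs y3 <= b3 -> maj J B ->
  maj (jcomp y0 y1 y2 y3 J) (jcomp b0 b1 b2 b3 B).
Proof.
  unfold maj; simpl. intros ? ? ? ? (?&?&?&?&?&?).
  repeat split; bnd.
Qed.

Definition vmaj (U1 U2 B : jet) : Prop :=
  norm2 (j0 U1, j0 U2) <= j0 B /\ norm2 (js U1, js U2) <= js B /\ norm2 (jt U1, jt U2) <= jt B /\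
  norm2 (jss U1, jss U2) <= jss B /\ norm2 (jst U1, jst U2) <= jst B /\ norm2 (jsst U1, jsst U2) <= jsst B.

Definition jbil (beta : R -> R -> R -> R -> R) (U1 U2 V1 V2 : jet) : jet :=
  let b f g := beta (f U1) (f U2) (g V1) (g V2) in
  mkJ (b j0 j0) (b js j0 + b j0 js) (b jt j0 + b j0 jt)
    (b jss j0 + 2 * b js js + b j0 jss)
    (b jst j0 + b js jt + b jt js + b j0 jst)
    (b jsst j0 + b jss jt + 2 * b jst js + 2 * b js jst + b jt jss + b j0 jsst).

Lemma norm2_pos u : 0 <= norm2 u.
Proof. apply sqrt_pos. Qed.

Lemma maj_bil beta U1 U2 V1 V2 B C :
  (forall a1 a2 b1 b2, Rabs (beta a1 a2 b1 b2) <= norm2 (a1, a2) * norm2 (b1, b2)) ->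
  vmaj U1 U2 B -> vmaj V1 V2 C -> maj (jbil beta U1 U2 V1 V2) (jmul B C).
Proof.
  intros Hb. unfold vmaj, maj, jbil; simpl. intros (?&?&?&?&?&?) (?&?&?&?&?&?).
  repeat split;
  repeat match goal with
  | |- Rabs (?a + ?b) <= ?A + ?B =>
     eapply Rle_trans; [apply Rabs_triang|]; apply Rplus_le_compat
  | |- Rabs (2 * ?a) <= 2 * ?A =>
     rewrite Rabs_mult, (Rabs_pos_eq 2) by lra; apply Rmult_le_compat_l; [lra|]
  | |- Rabs (beta _ _ _ _) <= _ =>
     eapply Rle_trans; [apply Hb|]; apply Rmult_le_compat; try apply norm2_pos; assumption
  end.
Qed.

Lemma CS_dot a1 a2 b1 b2 : Rabs (a1 * b1 + a2 * b2) <= norm2 (a1, a2) * norm2 (b1, b2).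
Proof.
  unfold norm2, dot; simpl. rewrite <- sqrt_mult_alt by nra.
  rewrite <- sqrt_Rsqr_abs. apply sqrt_le_1_alt. unfold Rsqr.
  assert (0 <= (a1*b2 - a2*b1)^2) by apply pow2_ge_0. nra.
Qed.

Lemma CS_cross a1 a2 b1 b2 : Rabs (a1 * b2 + -1 * (a2 * b1)) <= norm2 (a1, a2) * norm2 (b1, b2).
Proof.
  unfold norm2, dot; simpl. rewrite <- sqrt_mult_alt by nra.
  rewrite <- sqrt_Rsqr_abs. apply sqrt_le_1_alt. unfold Rsqr.
  assert (0 <= (a1*b1 + a2*b2)^2) by apply pow2_ge_0. nra.
Qed.

Definition jdot U1 U2 V1 V2 := jadd (jmul U1 V1) (jmul U2 V2).
Definition jcross U1 U2 V1 V2 := jadd (jmul U1 V2) (jmul (jconst (-1)) (jmul U2 V1)).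

Lemma jdot_bil U1 U2 V1 V2 :
  jdot U1 U2 V1 V2 = jbil (fun a1 a2 b1 b2 => a1 * b1 + a2 * b2) U1 U2 V1 V2.
Proof. unfold jdot, jbil, jadd, jmul; simpl. f_equal; ring. Qed.

Lemma jcross_bil U1 U2 V1 V2 :
  jcross U1 U2 V1 V2 = jbil (fun a1 a2 b1 b2 => a1 * b2 + -1 * (a2 * b1)) U1 U2 V1 V2.
Proof. unfold jcross, jbil, jadd, jmul, jconst; simpl. f_equal; ring. Qed.

Lemma maj_dot U1 U2 V1 V2 B C : vmaj U1 U2 B -> vmaj V1 V2 C -> maj (jdot U1 U2 V1 V2) (jmul B C).
Proof. intros. rewrite jdot_bil. apply maj_bil; auto. intros; apply CS_dot. Qed.

Lemma maj_cross U1 U2 V1 V2 B C : vmaj U1 U2 B -> vmaj V1 V2 C -> maj (jcross U1 U2 V1 V2) (jmul B C).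
Proof. intros. rewrite jcross_bil. apply maj_bil; auto. intros; apply CS_cross. Qed.

Lemma Xid x dx Dx s t : vadd x (vadd (vscal s dx) (vscal t Dx)) = vadd (vadd x (vscal t Dx)) (vscal s dx).
Proof. destruct x, dx, Dx; unfold vadd, vscal; simpl; f_equal; ring. Qed.
Lemma X0id x dx Dx t : vadd x (vadd (vscal 0 dx) (vscal t Dx)) = vadd x (vscal t Dx).
Proof. destruct x, dx, Dx; unfold vadd, vscal; simpl; f_equal; ring. Qed.
Lemma X00 x dx Dx : vadd x (vadd (vscal 0 dx) (vscal 0 Dx)) = x.
Proof. destruct x, dx, Dx; unfold vadd, vscal; simpl; f_equal; ring. Qed.

Lemma Nice_W (w : vec -> vec) (pi : vec -> R) (Hpi : forall (G : R -> vec) t, pi (vDerive G t) = Derive (fun s => pi (G s)) t) (Hg : Ck 3 (fun x => pi (w x))) (x dx Dx : vec) : Nice (fun s t => pi (w (vadd x (vadd (vscal s dx) (vscal t Dx)))))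
  (mkJ (pi (w x)) (pi (Dw1 w x dx)) (pi (Dw1 w x Dx)) (pi (Dw2 w x dx dx)) (pi (Dw2 w x Dx dx))
       (pi (Dw3 w x Dx dx dx))).
Proof.
  apply (mkNice _ _ 1 (fun s t => pi (Dw1 w (vadd x (vadd (vscal s dx) (vscal t Dx))) dx))
                     (fun s t => pi (Dw2 w (vadd x (vadd (vscal s dx) (vscal t Dx))) dx dx))); simpl.
  - lra.
  - intros s t _ _. rewrite (Xid x dx Dx s t). split.
    + eapply isd_ext; [intros z; rewrite (Xid x dx Dx z t); reflexivity|].
      apply (W0 w pi Hpi Hg).
    + eapply isd_ext; [intros z; rewrite (Xid x dx Dx z t); reflexivity|].
      apply (W1 w pi Hpi Hg).
  - rewrite X00; reflexivity.
  - rewrite X00; reflexivity.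
  - rewrite X00; reflexivity.
  - eapply isd_ext; [intros z; rewrite (X0id x dx Dx z); reflexivity|].
    pose proof (W0 w pi Hpi Hg x Dx 0) as K; rewrite vadd_0 in K; exact K.
  - eapply isd_ext; [intros z; rewrite (X0id x dx Dx z); reflexivity|].
    pose proof (W1 w pi Hpi Hg x Dx dx 0) as K; rewrite vadd_0 in K; exact K.
  - eapply isd_ext; [intros z; rewrite (X0id x dx Dx z); reflexivity|].
    pose proof (W2 w pi Hpi Hg x Dx dx dx 0) as K; rewrite vadd_0 in K; exact K.
Qed.

Lemma dot_lt (u : vec) v : norm2 u < v -> fst u * fst u + snd u * snd u < v ^ 2.
Proof.
  unfold norm2, dot. intros H.
  assert (H0 : 0 <= fst u * fst u + snd u * snd u) by nra.
  pose proof (sqrt_sqrt _ H0). pose proof (sqrt_pos (fst u * fst u + snd u * snd u)). nra.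
Qed.

Ltac cont2d := repeat first [ apply continuity_2d_pt_plus | apply continuity_2d_pt_mult
  | apply continuity_2d_pt_const | apply continuity_2d_pt_id1 | apply continuity_2d_pt_id2 ].

Lemma n_pos p dp Dp : p <> vzero -> exists d, 0 < d /\ forall s t, Rabs s < d -> Rabs t < d ->
  0 < (fst p + (s * fst dp + t * fst Dp)) * (fst p + (s * fst dp + t * fst Dp)) +
      (snd p + (s * snd dp + t * snd Dp)) * (snd p + (s * snd dp + t * snd Dp)).
Proof.
  intros Hp.
  assert (C : continuity_2d_pt (fun s t => (fst p + (s * fst dp + t * fst Dp)) * (fst p + (s * fst dp + t * fst Dp)) +
      (snd p + (s * snd dp + t * snd Dp)) * (snd p + (s * snd dp + t * snd Dp))) 0 0).
  { apply continuity_2d_pt_plus; apply continuity_2d_pt_mult; apply continuity_2d_pt_plus;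
    try apply continuity_2d_pt_const; apply continuity_2d_pt_plus; apply continuity_2d_pt_mult;
    try apply continuity_2d_pt_const; try apply continuity_2d_pt_id1; apply continuity_2d_pt_id2. }
  assert (N : (fst p + (0 * fst dp + 0 * fst Dp)) * (fst p + (0 * fst dp + 0 * fst Dp)) +
      (snd p + (0 * snd dp + 0 * snd Dp)) * (snd p + (0 * snd dp + 0 * snd Dp)) <> 0).
  { destruct p as [p1 p2]; simpl. intros E. apply Hp. unfold vzero.
    assert (p1 = 0) by nra. assert (p2 = 0) by nra. subst; reflexivity. }
  destruct (continuity_2d_pt_neq_0 _ _ _ C N) as [d Hd].
  exists d. split; [apply cond_pos|]. intros s t Hs Ht.
  specialize (Hd s t). rewrite !Rminus_0_r in Hd. specialize (Hd Hs Ht).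
  set (a := fst p + (s * fst dp + t * fst Dp)) in *. set (b := snd p + (s * snd dp + t * snd Dp)) in *.
  assert (H0 : 0 <= a * a + b * b) by nra.
  destruct (Rle_lt_or_eq_dec _ _ H0) as [|E]; [assumption|]. exfalso; apply Hd; symmetry; exact E.
Qed.

Lemma fcost_alg v P1 P2 W1 W2 :
  (-1 * (P1 * W1 + P2 * W2) + sqrt (v ^ 2 * (P1 * P1 + P2 * P2) + -1 * ((P1 * W2 + -1 * (P2 * W1)) * (P1 * W2 + -1 * (P2 * W1)))))
  * / (v ^ 2 + -1 * (W1 * W1 + W2 * W2)) =
  (- (P1 * W1 + P2 * W2) + sqrt ((P1 * W1 + P2 * W2) ^ 2 + (v ^ 2 - (W1 * W1 + W2 * W2)) * (P1 * P1 + P2 * P2))) /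
  (v ^ 2 - (W1 * W1 + W2 * W2)).
Proof.
  replace (v ^ 2 * (P1 * P1 + P2 * P2) + -1 * ((P1 * W2 + -1 * (P2 * W1)) * (P1 * W2 + -1 * (P2 * W1))))
    with ((P1 * W1 + P2 * W2) ^ 2 + (v ^ 2 - (W1 * W1 + W2 * W2)) * (P1 * P1 + P2 * P2)) by ring.
  unfold Rdiv. replace (v ^ 2 + -1 * (W1 * W1 + W2 * W2)) with (v ^ 2 - (W1 * W1 + W2 * W2)) by ring.
  ring.
Qed.

Lemma core_nice vbar w x p dx dp Dx Dp : C3 w -> (forall y, norm2 (w y) < vbar) -> p <> vzero ->
  let JP1 := mkJ (fst p) (fst dp) (fst Dp) 0 0 0 in
  let JP2 := mkJ (snd p) (snd dp) (snd Dp) 0 0 0 in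
  let JW1 := mkJ (fst (w x)) (fst (Dw1 w x dx)) (fst (Dw1 w x Dx)) (fst (Dw2 w x dx dx)) (fst (Dw2 w x Dx dx))
       (fst (Dw3 w x Dx dx dx)) in
  let JW2 := mkJ (snd (w x)) (snd (Dw1 w x dx)) (snd (Dw1 w x Dx)) (snd (Dw2 w x dx dx)) (snd (Dw2 w x Dx dx))
       (snd (Dw3 w x Dx dx dx)) in
  let JA := jdot JP1 JP2 JW1 JW2 in
  let JN := jdot JP1 JP2 JP1 JP2 in
  let JC := jcross JP1 JP2 JW1 JW2 in
  let JWW := jdot JW1 JW2 JW1 JW2 in
  let JD := jadd (jconst (vbar ^ 2)) (jmul (jconst (-1)) JWW) in
  let JQ := jadd (jmul (jconst (vbar ^ 2)) JN) (jmul (jconst (-1)) (jmul JC JC)) in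
  let JS := jcomp (sqrt (j0 JQ)) (/ (2 * sqrt (j0 JQ))) (- / (4 * sqrt (j0 JQ) ^ 3))
                  (3 / (8 * sqrt (j0 JQ) ^ 5)) JQ in
  let JI := jcomp (/ j0 JD) (- / j0 JD ^ 2) (2 / j0 JD ^ 3) (- 6 / j0 JD ^ 4) JD in
  D3f vbar w x p dx dp Dx Dp = jsst (jmul (jadd (jmul (jconst (-1)) JA) JS) JI).
Proof.
  intros HC Hw Hp JP1 JP2 JW1 JW2 JA JN JC JWW JD JQ JS JI.
  pose proof (Nice_affine (fst p) (fst dp) (fst Dp)) as NP1.
  pose proof (Nice_affine (snd p) (snd dp) (snd Dp)) as NP2.
  pose proof (Nice_W w fst (fun G t => eq_refl) (proj1 HC) x dx Dx) as NW1.
  pose proof (Nice_W w snd (fun G t => eq_refl) (proj2 HC) x dx Dx) as NW2.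
  pose proof (Nice_plus _ _ _ _ (Nice_mult _ _ _ _ NP1 NW1) (Nice_mult _ _ _ _ NP2 NW2)) as NA.
  pose proof (Nice_plus _ _ _ _ (Nice_mult _ _ _ _ NP1 NP1) (Nice_mult _ _ _ _ NP2 NP2)) as NN.
  pose proof (Nice_plus _ _ _ _ (Nice_mult _ _ _ _ NP1 NW2)
     (Nice_mult _ _ _ _ (Nice_const (-1)) (Nice_mult _ _ _ _ NP2 NW1))) as NC.
  pose proof (Nice_plus _ _ _ _ (Nice_mult _ _ _ _ NW1 NW1) (Nice_mult _ _ _ _ NW2 NW2)) as NWW.
  pose proof (Nice_plus _ _ _ _ (Nice_const (vbar ^ 2)) (Nice_mult _ _ _ _ (Nice_const (-1)) NWW)) as ND.
  pose proof (Nice_plus _ _ _ _ (Nice_mult _ _ _ _ (Nice_const (vbar ^ 2)) NN)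
     (Nice_mult _ _ _ _ (Nice_const (-1)) (Nice_mult _ _ _ _ NC NC))) as NQ.
  cbv beta in ND, NQ.
  assert (DposAll : forall s t, 0 < vbar ^ 2 + -1 * (fst (w (vadd x (vadd (vscal s dx) (vscal t Dx)))) * fst (w (vadd x (vadd (vscal s dx) (vscal t Dx)))) + snd (w (vadd x (vadd (vscal s dx) (vscal t Dx)))) * snd (w (vadd x (vadd (vscal s dx) (vscal t Dx)))))).
  { intros s t. pose proof (dot_lt _ _ (Hw (vadd x (vadd (vscal s dx) (vscal t Dx))))). lra. }
  pose proof (Nice_comp Rinv _ _ _ _ _ inv_derivs ND) as NI.
  assert (NI' : Nice (fun s t => / (vbar ^ 2 + -1 * (fst (w (vadd x (vadd (vscal s dx) (vscal t Dx)))) * fst (w (vadd x (vadd (vscal s dx) (vscal t Dx)))) + snd (w (vadd x (vadd (vscal s dx) (vscal t Dx)))) * snd (w (vadd x (vadd (vscal s dx) (vscal t Dx))))))) JI).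
  { apply NI. exists 1. split; [lra|]. intros; apply DposAll. }
  clear NI.
  destruct (n_pos p dp Dp Hp) as [dn [Hdn Hn]].
  pose proof (Nice_comp sqrt _ _ _ _ _ sqrt_derivs NQ) as NS.
  assert (NS' : Nice (fun s t => sqrt (vbar ^ 2 * ((fst p + (s * fst dp + t * fst Dp)) * (fst p + (s * fst dp + t * fst Dp)) +
      (snd p + (s * snd dp + t * snd Dp)) * (snd p + (s * snd dp + t * snd Dp))) + -1 *
      (((fst p + (s * fst dp + t * fst Dp)) * snd (w (vadd x (vadd (vscal s dx) (vscal t Dx)))) + -1 * ((snd p + (s * snd dp + t * snd Dp)) * fst (w (vadd x (vadd (vscal s dx) (vscal t Dx))))))
     * ((fst p + (s * fst dp + t * fst Dp)) * snd (w (vadd x (vadd (vscal s dx) (vscal t Dx)))) + -1 * ((snd p + (s * snd dp + t * snd Dp)) * fst (w (vadd x (vadd (vscal s dx) (vscal t Dx))))))))) JS).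
  { apply NS. exists dn. split; [exact Hdn|]. intros s t Hs Ht.
    specialize (Hn s t Hs Ht). specialize (DposAll s t).
    set (P1 := fst p + (s * fst dp + t * fst Dp)) in *.
    set (P2 := snd p + (s * snd dp + t * snd Dp)) in *.
    set (W1 := fst (w (vadd x (vadd (vscal s dx) (vscal t Dx))))) in *.
    set (W2 := snd (w (vadd x (vadd (vscal s dx) (vscal t Dx))))) in *.
    replace (vbar ^ 2 * (P1 * P1 + P2 * P2) + -1 * ((P1 * W2 + -1 * (P2 * W1)) * (P1 * W2 + -1 * (P2 * W1))))
      with ((P1 * W1 + P2 * W2) ^ 2 + (vbar ^ 2 + -1 * (W1 * W1 + W2 * W2)) * (P1 * P1 + P2 * P2)) by ring.
    pose proof (pow2_ge_0 (P1 * W1 + P2 * W2)). pose proof (Rmult_lt_0_compat _ _ DposAll Hn). lra. }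
  clear NS.
  pose proof (Nice_mult _ _ _ _ (Nice_plus _ _ _ _ (Nice_mult _ _ _ _ (Nice_const (-1)) NA) NS') NI') as NF.
  unfold D3f.
  apply (Nice_D3 (fun s t => fcost vbar w (vadd x (vadd (vscal s dx) (vscal t Dx))) (vadd p (vadd (vscal s dp) (vscal t Dp))))).
  eapply Nice_ext; [|exact NF].
  intros s t. cbv beta. unfold fcost, dot. cbn [fst snd vadd vscal]. rewrite fcost_alg. reflexivity.
Qed.

Definition BFdef (vbar u r X Y ZX ZP c1 c2 c3 : R) : jet :=
  let BP := mkJ r Y ZP 0 0 0 in
  let BW := mkJ (u / 2) (c1 * X) (c1 * ZX) (c2 * X * X) (c2 * ZX * X) (c3 * ZX * X * X) in
  let BA := jmul BP BW in
  let BN := jmul BP BP in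
  let BWW := jmul BW BW in
  let BD := jadd (jconst (vbar ^ 2)) (jmul (jconst 1) BWW) in
  let BQ := jadd (jmul (jconst (5 / 4 * u ^ 2)) BN) (jmul (jconst 1) (jmul BA BA)) in
  let BS := jcomp (9 / 8 * (u * r)) (/ (2 * (u * r))) (/ (4 * (u * r) ^ 3)) (3 / (8 * (u * r) ^ 5)) BQ in
  let BI := jcomp (/ u ^ 2) (/ (u ^ 2) ^ 2) (2 / (u ^ 2) ^ 3) (6 / (u ^ 2) ^ 4) BD in
  jmul (jadd (jmul (jconst 1) BA) BS) BI.

Ltac pos := repeat match goal with
 | |- 0 <= _ + _ => apply Rplus_le_le_0_compat
 | |- 0 <= _ * _ => apply Rmult_le_pos
 | |- 0 <= / _ => apply Rlt_le, Rinv_0_lt_compat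
 | |- 0 < _ * _ => apply Rmult_lt_0_compat
 | |- 0 < / _ => apply Rinv_0_lt_compat
 | |- 0 < _ ^ _ => apply pow_lt
 | |- 0 <= _ ^ _ => apply pow_le
 | |- 0 <= _ => first [assumption | lra]
 | |- 0 < _ => first [assumption | lra]
 end.

Lemma final_alg vbar u r X Y ZX ZP c1 c2 c3 : 0 < u -> 0 < r -> 0 <= X -> 0 <= Y -> 0 <= ZX -> 0 <= ZP ->
  0 <= c1 -> 0 <= c2 -> 0 <= c3 ->
  jsst (BFdef vbar u r X Y ZX ZP c1 c2 c3) <=
  (2 / u ^ 4 * (37 * c1 ^ 3 + 21 * c1 * c2 * u + 2 * c3 * u ^ 2) * r * X ^ 2
   + 1 / u ^ 3 * (57 * c1 ^ 2 + 13 * u * c2) * X * Y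
   + 20 * c1 / u ^ 2 / r * Y ^ 2) * ZX
  + (1 / u ^ 3 * (29 * c1 ^ 2 + 7 * u * c2) * X ^ 2
   + 40 * c1 / u ^ 2 / r * X * Y
   + 18 / u / r ^ 2 * Y ^ 2) * ZP.
Proof.
  intros Hu Hr HX HY HZX HZP H1 H2 H3.
  assert (E : jsst (BFdef vbar u r X Y ZX ZP c1 c2 c3) =
    135/8 * Y^2 * ZP / (u * r^2) + 25/8 * c3 * X^2 * ZX * r / u^2 + 19/2 * c2 * X * Y * ZX / u^2
    + 19/4 * c2 * X^2 * ZP / u^2 + 95/8 * c1 * Y^2 * ZX / (r * u^2) + 95/4 * c1 * X * Y * ZP / (r * u^2)
    + 129/4 * c1 * c2 * X^2 * ZX * r / u^3 + 153/4 * c1^2 * X * Y * ZX / u^3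
    + 153/8 * c1^2 * X^2 * ZP / u^3 + 423/8 * c1^3 * X^2 * ZX * r / u^4).
  { unfold BFdef. simpl. field. split; apply Rgt_not_eq; assumption. }
  rewrite E.
  match goal with |- ?S <= ?R => cut (0 <= R - S); [lra|] end.
  match goal with |- 0 <= ?D => replace D with
    ((18 - 135/8) * Y^2 * ZP / (u * r^2) + (4 - 25/8) * c3 * X^2 * ZX * r / u^2
     + (13 - 19/2) * c2 * X * Y * ZX / u^2 + (7 - 19/4) * c2 * X^2 * ZP / u^2
     + (20 - 95/8) * c1 * Y^2 * ZX / (r * u^2) + (40 - 95/4) * c1 * X * Y * ZP / (r * u^2)
     + (42 - 129/4) * c1 * c2 * X^2 * ZX * r / u^3 + (57 - 153/4) * c1^2 * X * Y * ZX / u^3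
     + (29 - 153/8) * c1^2 * X^2 * ZP / u^3 + (74 - 423/8) * c1^3 * X^2 * ZX * r / u^4)
    by (field; split; apply Rgt_not_eq; assumption) end.
  unfold Rdiv. pos.
Qed.

Definition JFdef vbar w x p dx dp Dx Dp : jet :=
  let JP1 := mkJ (fst p) (fst dp) (fst Dp) 0 0 0 in
  let JP2 := mkJ (snd p) (snd dp) (snd Dp) 0 0 0 in
  let JW1 := mkJ (fst (w x)) (fst (Dw1 w x dx)) (fst (Dw1 w x Dx)) (fst (Dw2 w x dx dx)) (fst (Dw2 w x Dx dx))
       (fst (Dw3 w x Dx dx dx)) in
  let JW2 := mkJ (snd (w x)) (snd (Dw1 w x dx)) (snd (Dw1 w x Dx)) (snd (Dw2 w x dx dx)) (snd (Dw2 w x Dx dx))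
       (snd (Dw3 w x Dx dx dx)) in
  let JA := jdot JP1 JP2 JW1 JW2 in
  let JN := jdot JP1 JP2 JP1 JP2 in
  let JC := jcross JP1 JP2 JW1 JW2 in
  let JWW := jdot JW1 JW2 JW1 JW2 in
  let JD := jadd (jconst (vbar ^ 2)) (jmul (jconst (-1)) JWW) in
  let JQ := jadd (jmul (jconst (vbar ^ 2)) JN) (jmul (jconst (-1)) (jmul JC JC)) in
  let JS := jcomp (sqrt (j0 JQ)) (/ (2 * sqrt (j0 JQ))) (- / (4 * sqrt (j0 JQ) ^ 3))
                  (3 / (8 * sqrt (j0 JQ) ^ 5)) JQ in
  let JI := jcomp (/ j0 JD) (- / j0 JD ^ 2) (2 / j0 JD ^ 3) (- 6 / j0 JD ^ 4) JD in
  jmul (jadd (jmul (jconst (-1)) JA) JS) JI.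

Lemma core_nice' vbar w x p dx dp Dx Dp : C3 w -> (forall y, norm2 (w y) < vbar) -> p <> vzero ->
  D3f vbar w x p dx dp Dx Dp = jsst (JFdef vbar w x p dx dp Dx Dp).
Proof. intros. exact (core_nice vbar w x p dx dp Dx Dp H H0 H1). Qed.

Lemma np v : norm2 (fst v, snd v) = norm2 v.
Proof. destruct v; reflexivity. Qed.
Lemma n00 : norm2 (0, 0) = 0.
Proof. unfold norm2, dot; simpl. replace (0 * 0 + 0 * 0) with 0 by ring. apply sqrt_0. Qed.

Lemma kbn (c k a b : R) n : 0 < k -> 0 < a -> a <= b -> Rabs (c * / (k * b ^ n)) <= Rabs c * / (k * a ^ n).
Proof.
  intros Hk Ha Hab. rewrite Rabs_mult. apply Rmult_le_compat_l; [apply Rabs_pos|].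
  assert (0 < a ^ n) by (apply pow_lt; lra).
  assert (a ^ n <= b ^ n) by (apply pow_incr; lra).
  rewrite Rabs_pos_eq.
  - apply Rinv_le_contravar; [apply Rmult_lt_0_compat; lra | apply Rmult_le_compat_l; lra].
  - apply Rlt_le, Rinv_0_lt_compat. apply Rmult_lt_0_compat; lra.
Qed.

Lemma norm2_sq v : norm2 v ^ 2 = fst v * fst v + snd v * snd v.
Proof. unfold norm2, dot. rewrite pow2_sqrt; [ring|]. nra. Qed.

Lemma core_maj vbar c0 c1 c2 c3 w x p dx dp Dx Dp :
  0 < vbar -> p <> vzero -> norm2 (w x) <= c0 -> c0 <= vbar / sqrt 5 ->
  (forall h, norm2 (Dw1 w x h) <= c1 * norm2 h) ->
  (forall h1 h2, norm2 (Dw2 w x h1 h2) <= c2 * norm2 h1 * norm2 h2) ->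
  (forall h1 h2 h3, norm2 (Dw3 w x h1 h2 h3) <= c3 * norm2 h1 * norm2 h2 * norm2 h3) ->
  maj (JFdef vbar w x p dx dp Dx Dp)
      (BFdef vbar (sqrt (vbar ^ 2 - c0 ^ 2)) (norm2 p) (norm2 dx) (norm2 dp) (norm2 Dx) (norm2 Dp) c1 c2 c3).
Proof.
  intros Hv Hp Hc0 H5 H1 H2 H3.
  assert (c0pos : 0 <= c0) by (eapply Rle_trans; [apply norm2_pos | exact Hc0]).
  assert (S5 : 0 < sqrt 5) by (apply sqrt_lt_R0; lra).
  assert (Hc05 : 5 * c0 ^ 2 <= vbar ^ 2).
  { assert (c0 * sqrt 5 <= vbar).
    { apply (Rmult_le_compat_r (sqrt 5)) in H5; [|lra].
      unfold Rdiv in H5. rewrite Rmult_assoc, Rinv_l, Rmult_1_r in H5; lra. }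
    assert (E5 : sqrt 5 ^ 2 = 5) by (apply pow2_sqrt; lra).
    assert (0 <= c0 * sqrt 5) by (apply Rmult_le_pos; lra).
    replace (5 * c0 ^ 2) with ((c0 * sqrt 5) ^ 2) by (rewrite Rpow_mult_distr, E5; ring).
    apply pow_incr; lra. }
  set (u := sqrt (vbar ^ 2 - c0 ^ 2)).
  assert (Hu2 : u ^ 2 = vbar ^ 2 - c0 ^ 2) by (apply pow2_sqrt; nra).
  assert (Hu : 0 < u) by (apply sqrt_lt_R0; nra).
  assert (Hcu : c0 <= u / 2).
  { assert (c0 ^ 2 <= (u / 2) ^ 2) by nra.
    nra. }
  set (r := norm2 p).
  assert (Hr2 : r ^ 2 = fst p * fst p + snd p * snd p) by apply norm2_sq.
  assert (Hr : 0 < r).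
  { assert (0 <= r) by apply norm2_pos. destruct (Rle_lt_or_eq_dec _ _ H) as [|E]; auto.
    exfalso. apply Hp. destruct p as [p1 p2]; simpl in Hr2. rewrite <- E in Hr2.
    assert (p1 = 0) by nra. assert (p2 = 0) by nra. subst. reflexivity. }
  assert (Hww : fst (w x) * fst (w x) + snd (w x) * snd (w x) <= c0 ^ 2).
  { rewrite <- norm2_sq. apply pow_incr. split; [apply norm2_pos|exact Hc0]. }
  assert (VP : vmaj (mkJ (fst p) (fst dp) (fst Dp) 0 0 0) (mkJ (snd p) (snd dp) (snd Dp) 0 0 0)
                    (mkJ r (norm2 dp) (norm2 Dp) 0 0 0)).
  { unfold vmaj; simpl. rewrite !np, n00. repeat split; first [apply Rle_refl | lra]. }
  assert (VW : vmaj (mkJ (fst (w x)) (fst (Dw1 w x dx)) (fst (Dw1 w x Dx)) (fst (Dw2 w x dx dx)) (fst (Dw2 w x Dx dx))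
       (fst (Dw3 w x Dx dx dx))) (mkJ (snd (w x)) (snd (Dw1 w x dx)) (snd (Dw1 w x Dx)) (snd (Dw2 w x dx dx)) (snd (Dw2 w x Dx dx))
       (snd (Dw3 w x Dx dx dx)))
       (mkJ (u / 2) (c1 * norm2 dx) (c1 * norm2 Dx) (c2 * norm2 dx * norm2 dx) (c2 * norm2 Dx * norm2 dx)
          (c3 * norm2 Dx * norm2 dx * norm2 dx))).
  { unfold vmaj; cbn [j0 js jt jss jst jsst]. rewrite !np. split; [lra|]. split; [exact (H1 dx)|]. split; [exact (H1 Dx)|]. split; [exact (H2 dx dx)|]. split; [exact (H2 Dx dx)|]. exact (H3 Dx dx dx). }
  unfold JFdef, BFdef. cbv zeta.
  set (q0 := j0 (jadd (jmul (jconst (vbar ^ 2)) _) _)).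
  set (d0 := j0 (jadd (jconst (vbar ^ 2)) _)).
  assert (Eq0 : q0 = (fst p * fst (w x) + snd p * snd (w x)) ^ 2 +
      (vbar ^ 2 - (fst (w x) * fst (w x) + snd (w x) * snd (w x))) * (fst p * fst p + snd p * snd p)).
  { unfold q0. cbn [j0 jadd jmul jconst jdot jcross]. ring. }
  assert (Eq0' : q0 = vbar ^ 2 * (fst p * fst p + snd p * snd p) - (fst p * snd (w x) - snd p * fst (w x)) ^ 2).
  { unfold q0. cbn [j0 jadd jmul jconst jdot jcross]. ring. }
  assert (Ed0 : d0 = vbar ^ 2 - (fst (w x) * fst (w x) + snd (w x) * snd (w x))).
  { unfold d0. cbn [j0 jadd jmul jconst jdot jcross]. ring. }
  assert (Hd0 : u ^ 2 <= d0) by lra.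
  assert (Hq1 : (u * r) ^ 2 <= q0).
  { rewrite Eq0, <- Hr2. pose proof (pow2_ge_0 (fst p * fst (w x) + snd p * snd (w x))).
    pose proof (pow2_ge_0 r). replace ((u * r) ^ 2) with (u ^ 2 * r ^ 2) by ring. nra. }
  assert (Hq2 : q0 <= (9 / 8 * (u * r)) ^ 2).
  { rewrite Eq0', <- Hr2. pose proof (pow2_ge_0 (fst p * snd (w x) - snd p * fst (w x))).
    pose proof (pow2_ge_0 r).
    assert (vbar ^ 2 <= 81 / 64 * u ^ 2) by nra.
    replace ((9 / 8 * (u * r)) ^ 2) with (81 / 64 * u ^ 2 * r ^ 2) by field. nra. }
  assert (Hur : 0 < u * r) by (apply Rmult_lt_0_compat; auto).
  assert (HS1 : u * r <= sqrt q0).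
  { rewrite <- (sqrt_pow2 (u * r)) by lra. apply sqrt_le_1_alt. exact Hq1. }
  assert (HS2 : sqrt q0 <= 9 / 8 * (u * r)).
  { rewrite <- (sqrt_pow2 (9 / 8 * (u * r))) by lra. apply sqrt_le_1_alt. exact Hq2. }
  assert (Hu2p : 0 < u ^ 2) by (apply pow_lt; lra).
  apply maj_mul.
  - apply maj_add.
    + apply maj_mul.
      * apply maj_const. unfold Rabs; destruct (Rcase_abs _); lra.
      * apply maj_dot; assumption.
    + apply maj_comp.
      * rewrite Rabs_pos_eq by apply sqrt_pos. exact HS2.
      * pose proof (kbn 1 2 (u * r) (sqrt q0) 1 ltac:(lra) Hur HS1) as K.
        rewrite !pow_1, Rabs_R1, !Rmult_1_l in K. exact K.
      * rewrite Rabs_Ropp. pose proof (kbn 1 4 (u * r) (sqrt q0) 3 ltac:(lra) Hur HS1) as K.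
        rewrite Rabs_R1, !Rmult_1_l in K. exact K.
      * pose proof (kbn 3 8 (u * r) (sqrt q0) 5 ltac:(lra) Hur HS1) as K.
        rewrite (Rabs_pos_eq 3) in K by lra. exact K.
      * apply maj_add.
        -- apply maj_mul; [apply maj_const | apply maj_dot; assumption].
           rewrite Rabs_pos_eq by (apply pow2_ge_0). nra.
        -- apply maj_mul; [apply maj_const | apply maj_mul; apply maj_cross; assumption].
           unfold Rabs; destruct (Rcase_abs _); lra.
  - apply maj_comp.
    + pose proof (kbn 1 1 (u ^ 2) d0 1 ltac:(lra) Hu2p Hd0) as K.
      rewrite !pow_1, Rabs_R1, !Rmult_1_l in K. exact K.
    + rewrite Rabs_Ropp. pose proof (kbn 1 1 (u ^ 2) d0 2 ltac:(lra) Hu2p Hd0) as K.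
      rewrite Rabs_R1, !Rmult_1_l in K. exact K.
    + pose proof (kbn 2 1 (u ^ 2) d0 3 ltac:(lra) Hu2p Hd0) as K.
      rewrite (Rabs_pos_eq 2), !Rmult_1_l in K by lra. exact K.
    + pose proof (kbn (- 6) 1 (u ^ 2) d0 4 ltac:(lra) Hu2p Hd0) as K.
      rewrite !Rmult_1_l in K. unfold Rdiv.
      replace 6 with (Rabs (- 6)) by (unfold Rabs; destruct (Rcase_abs _); lra). exact K.
    + apply maj_add.
      * apply maj_const. rewrite Rabs_pos_eq by (apply pow2_ge_0). lra.
      * apply maj_mul; [apply maj_const | apply maj_dot; assumption].
        unfold Rabs; destruct (Rcase_abs _); lra.
Qed.

Lemma n10 : norm2 (1, 0) = 1.
Proof. unfold norm2, dot; simpl. replace (1 * 1 + 0 * 0) with 1 by ring. apply sqrt_1. Qed.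

Theorem lemma9 (vbar : R) (xO xD : vec) (w : vec -> vec) (a c0 c1 c2 c3 : R) :
  0 < vbar -> xO <> xD -> C3 w ->
  (forall x, norm2 (w x) < vbar) ->
  norm2 (vsub xO xD) < a ->
  (forall x, ellipse xO xD a x -> norm2 (w x) <= c0) ->
  c0 <= vbar / sqrt 5 ->
  (forall x h, ellipse xO xD a x -> norm2 (Dw1 w x h) <= c1 * norm2 h) ->
  (forall x h1 h2, ellipse xO xD a x ->
     norm2 (Dw2 w x h1 h2) <= c2 * norm2 h1 * norm2 h2) ->
  (forall x h1 h2 h3, ellipse xO xD a x ->
     norm2 (Dw3 w x h1 h2 h3) <= c3 * norm2 h1 * norm2 h2 * norm2 h3) ->
  let vl := sqrt (vbar ^ 2 - c0 ^ 2) in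
  let g0 := 2 / vl ^ 4 * (37 * c1 ^ 3 + 21 * c1 * c2 * vl + 2 * c3 * vl ^ 2) in
  let g1 := 1 / vl ^ 3 * (29 * c1 ^ 2 + 7 * vl * c2) in
  let g2 := 1 / vl ^ 3 * (57 * c1 ^ 2 + 13 * vl * c2) in
  let g3 := 40 * c1 / vl ^ 2 in
  let g4 := 20 * c1 / vl ^ 2 in
  let g5 := 18 / vl in
  forall (xi dxi Dxi : R -> vec),
    InX xO xD xi -> InDX dxi -> InDX Dxi ->
  forall (tau : R) (xit dxit Dxit : vec),
    0 < tau < 1 ->
    has_vderiv xi tau xit -> has_vderiv dxi tau dxit -> has_vderiv Dxi tau Dxit ->
    ellipse xO xD a (xi tau) -> xit <> vzero ->
    Rabs (D3f vbar w (xi tau) xit (dxi tau) dxit (Dxi tau) Dxit)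
    <= (g0 * norm2 xit * norm2 (dxi tau) ^ 2
        + g2 * norm2 (dxi tau) * norm2 dxit
        + g4 / norm2 xit * norm2 dxit ^ 2) * norm2 (Dxi tau)
     + (g1 * norm2 (dxi tau) ^ 2
        + g3 / norm2 xit * norm2 (dxi tau) * norm2 dxit
        + g5 / norm2 xit ^ 2 * norm2 dxit ^ 2) * norm2 Dxit.
Proof.
  intros Hv Hneq HC Hw Ha Hc0 H5 H1 H2 H3 vl g0 g1 g2 g3 g4 g5 xi dxi Dxi HX HdX HDX
    tau xit dxit Dxit Htau Hd1 Hd2 Hd3 Hell Hxit.
  rewrite (core_nice' vbar w (xi tau) xit (dxi tau) dxit (Dxi tau) Dxit HC Hw Hxit).
  pose proof (core_maj vbar c0 c1 c2 c3 w (xi tau) xit (dxi tau) dxit (Dxi tau) Dxit Hv Hxit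
    (Hc0 _ Hell) H5 (fun h => H1 _ h Hell) (fun h1 h2 => H2 _ h1 h2 Hell)
    (fun h1 h2 h3 => H3 _ h1 h2 h3 Hell)) as M.
  destruct M as (_&_&_&_&_&M).
  eapply Rle_trans; [exact M|].
  assert (Hc1 : 0 <= c1).
  { pose proof (H1 _ (1, 0) Hell). rewrite n10 in H. pose proof (norm2_pos (Dw1 w (xi tau) (1, 0))). lra. }
  assert (Hc2 : 0 <= c2).
  { pose proof (H2 _ (1, 0) (1, 0) Hell). rewrite n10 in H. pose proof (norm2_pos (Dw2 w (xi tau) (1, 0) (1, 0))). lra. }
  assert (Hc3 : 0 <= c3).
  { pose proof (H3 _ (1, 0) (1, 0) (1, 0) Hell). rewrite n10 in H. pose proof (norm2_pos (Dw3 w (xi tau) (1, 0) (1, 0) (1, 0))). lra. }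
  assert (Hr : 0 < norm2 xit).
  { assert (0 <= norm2 xit) by apply norm2_pos. destruct (Rle_lt_or_eq_dec _ _ H) as [|E]; auto.
    exfalso. apply Hxit. pose proof (norm2_sq xit) as Q. rewrite <- E in Q. destruct xit as [p1 p2]; simpl in Q.
    assert (p1 = 0) by nra. assert (p2 = 0) by nra. subst. reflexivity. }
  assert (c0pos : 0 <= c0) by (eapply Rle_trans; [apply norm2_pos | exact (Hc0 _ Hell)]).
  assert (Hu : 0 < vl).
  { apply sqrt_lt_R0.
    assert (S5 : 1 < sqrt 5) by (rewrite <- sqrt_1; apply sqrt_lt_1_alt; lra).
    assert (c0 < vbar).
    { eapply Rle_lt_trans; [exact H5|]. unfold Rdiv. 
      rewrite <- (Rmult_1_r vbar) at 2. apply Rmult_lt_compat_l; [lra|].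
      rewrite <- Rinv_1. apply Rinv_lt_contravar; lra. }
    nra. }
  apply final_alg; auto; apply norm2_pos.
Qed.
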